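(* Let $G$ be the two-dimensional $m\times n$ grid graph (the Cartesian product of a path on $m$ nodes and a path on $n$ nodes) with $m,n\ge 2$ and $mn>4$. Then $G$ does not have real sign rank $2$ (indeed there is no $\mathbf{Z}\in\mathbb{R}^{mn\times 2}$ with $\operatorname{sign}(A_{ij})=\operatorname{sign}((\mathbf{Z}\mathbf{Z}^\top)_{ij})$ for all $i\neq j$, where $\mathbf{A}$ is the adjacency matrix of $G$).
   Context: $\operatorname{sign}:\mathbb{R}\to\{+,-\}$ takes the value $-$ on $(-\infty,0]$ and $+$ on $(0,\infty)$. Diagonal entries of adjacency matrices are ignored. The real sign rank of a graph with adjacency $\mathbf{A}\in\{0,1\}^{N\times N}$ is the minimal $f$ such that there exists $\mathbf{Z}\in\mathbb{R}^{N\times f}$ with $\operatorname{sign}(A_{ij})=\operatorname{sign}((\mathbf{Z}\mathbf{Z}^\top)_{ij})$ for all $i\neq j$. *)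

(* Defs.v *)
From mathcomp Require Import all_boot all_order all_algebra.
From mathcomp Require Import reals.
Set Implicit Arguments. Unset Strict Implicit. Unset Printing Implicit Defensive.
Import Order.TTheory GRing.Theory Num.Theory.
Local Open Scope ring_scope.

(* sign : R -> {+,-}; encoded as bool, true = "+" (x > 0), false = "-" (x <= 0). *)
Definition sgnpos {R : realType} (x : R) : bool := 0 < x.

Definition grid_adj {m n : nat} (i j : 'I_(m * n)) : bool :=
  let a1 := (i %/ n)%N in let b1 := (i %% n)%N in
  let a2 := (j %/ n)%N in let b2 := (j %% n)%N in
  ((a1 == a2) && ((b1 == b2.+1) || (b2 == b1.+1))) ||
  ((b1 == b2) && ((a1 == a2.+1) || (a2 == a1.+1))).

Definition grid_adj_mx {R : realType} (m n : nat) : 'M[R]_(m * n) :=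
  \matrix_(i < m * n, j < m * n) (grid_adj i j : nat)%:R.

Definition sign_realizes {R : realType} (N f : nat) (A : 'M[R]_N) (Z : 'M[R]_(N, f)) : Prop :=
  forall i j : 'I_N, i != j -> sgnpos (A i j) = sgnpos ((Z *m Z^T) i j).

Definition has_real_sign_rank {R : realType} (N : nat) (A : 'M[R]_N) (f : nat) : Prop :=
  (exists Z : 'M[R]_(N, f), sign_realizes A Z) /\
  (forall g : nat, (g < f)%N -> ~ exists Z : 'M[R]_(N, g), sign_realizes A Z).

(* Main.v *)
Require Import Defs.
From mathcomp Require Import all_boot all_order all_algebra.
From mathcomp Require Import reals.
From mathcomp Require Import ring lra zify.
Import Order.TTheory GRing.Theory Num.Theory.
Local Open Scope ring_scope.

Lemma c4 (R : realFieldType) (a1 a2 b1 b2 c1 c2 d1 d2 : R) :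
  0 < a1*b1+a2*b2 -> 0 < b1*c1+b2*c2 -> 0 < c1*d1+c2*d2 -> 0 < d1*a1+d2*a2 ->
  a1*c1+a2*c2 <= 0 -> b1*d1+b2*d2 <= 0 -> False.
Proof.
move=> P Q S T U V.
set x := a1*b2-a2*b1. set y := b1*c2-b2*c1. set z := c1*d2-c2*d1.
set w := d1*a2-d2*a1. set e := a1*c2-a2*c1.
have Bb : 0 <= b1*b1+b2*b2 by nra.
have Dd : 0 <= d1*d1+d2*d2 by nra.
have h1 : 0 < x*y.
  have -> : x*y = (a1*b1+a2*b2)*(b1*c1+b2*c2) - (a1*c1+a2*c2)*(b1*b1+b2*b2)
    by rewrite /x /y; ring.
  nra.
have h2 : 0 < y*z.
  have -> : y*z = (b1*c1+b2*c2)*(c1*d1+c2*d2) - (b1*d1+b2*d2)*(c1*c1+c2*c2)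
    by rewrite /z /y; ring.
  nra.
have h3 : 0 < z*w.
  have -> : z*w = (c1*d1+c2*d2)*(d1*a1+d2*a2) - (a1*c1+a2*c2)*(d1*d1+d2*d2)
    by rewrite /z /w; ring.
  nra.
have h4 : e*(b1*b1+b2*b2) = x*(b1*c1+b2*c2) + (a1*b1+a2*b2)*y
  by rewrite /e /x /y; ring.
have h5 : - e*(d1*d1+d2*d2) = z*(d1*a1+d2*a2) + (c1*d1+c2*d2)*w
  by rewrite /e /z /w; ring.
clearbody x y z w e.
have [xp|xn] : 0 < x \/ x < 0.
  case: (ltrgt0P x) => //; [by left|by right|by move=> x0; move: h1; rewrite x0 mul0r ltxx].
- have yp : 0 < y by nra.
  have zp : 0 < z by nra.
  have wp : 0 < w by nra.
  have : 0 < e*(b1*b1+b2*b2) by rewrite h4; nra.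
  have : 0 < - e*(d1*d1+d2*d2) by rewrite h5; nra.
  move=> H1 H2; case: (lerP 0 e) => He; nra.
- have yp : y < 0 by nra.
  have zp : z < 0 by nra.
  have wp : w < 0 by nra.
  have : e*(b1*b1+b2*b2) < 0 by rewrite h4; nra.
  have : - e*(d1*d1+d2*d2) < 0 by rewrite h5; nra.
  move=> H1 H2; case: (lerP 0 e) => He; nra.
Qed.

Lemma no_Z (R : realType) (m n : nat) :
  (2 <= m)%N -> (2 <= n)%N ->
  ~ (exists Z : 'M[R]_(m * n, 2), sign_realizes (@grid_adj_mx R m n) Z).
Proof.
move=> hm hn [Z HZ].
have n0 : (0 < n)%N by apply: leq_trans hn.
have b0 : (0 < m * n)%N by rewrite muln_gt0 n0 (leq_trans _ hm).
have b1 : (1 < m * n)%N by apply: leq_trans hn _; rewrite leq_pmull // (leq_trans _ hm).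
have b3 : (n.+1 < m * n)%N.
  apply: leq_trans (_ : (2 * n <= m * n)%N); last by rewrite leq_mul2r hm orbT.
  by rewrite mul2n -addnn -addn1 ltn_add2l.
have b2 : (n < m * n)%N by apply: ltn_trans b3.
pose i0 := Ordinal b0. pose i1 := Ordinal b1. pose i2 := Ordinal b3. pose i3 := Ordinal b2.
have key : forall (i j : 'I_(m * n)) (a1 c1 a2 c2 : nat),
    (i %/ n)%N = a1 -> (i %% n)%N = c1 -> (j %/ n)%N = a2 -> (j %% n)%N = c2 ->
    i != j ->
    (0 < Z i 0 * Z j 0 + Z i 1 * Z j 1) =
    (((a1 == a2) && ((c1 == c2.+1) || (c2 == c1.+1))) ||
     ((c1 == c2) && ((a1 == a2.+1) || (a2 == a1.+1)))).
  move=> i j a1 c1 a2 c2 e1 e2 e3 e4 ij.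
  have := HZ i j ij; rewrite /sgnpos !mxE big_ord_recr big_ord_recr big_ord0 /= add0r.
  rewrite !mxE /grid_adj e1 e2 e3 e4.
  rewrite (_ : widen_ord _ _ = 0); last by apply/val_inj.
  rewrite (_ : ord_max = 1); last by apply/val_inj.
  move=> <-.
  by case: (_ || _); rewrite ?ltr01 ?ltxx.
have d0 : (0 %/ n = 0)%N by rewrite div0n.
have m0 : (0 %% n = 0)%N by rewrite mod0n.
have d1 : (1 %/ n = 0)%N by rewrite divn_small.
have m1 : (1 %% n = 1)%N by rewrite modn_small.
have d3 : (n %/ n = 1)%N by rewrite divnn n0.
have m3 : (n %% n = 0)%N by rewrite modnn.
have d2 : (n.+1 %/ n = 1)%N.
  by rewrite -addn1 -{1}(mul1n n) divnMDl // divn_small.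
have m2 : (n.+1 %% n = 1)%N.
  by rewrite -addn1 -{1}(mul1n n) modnMDl modn_small.
have ne : forall (i j : 'I_(m * n)), (i != j :> nat) -> i != j by [].
have n1 : n != 1%N by apply/eqP => E; rewrite E in hn.
have ne' : forall i j : 'I_(m * n), (i != j :> nat) = true -> i != j by [].
have e01 := key i0 i1 _ _ _ _ d0 m0 d1 m1 (ne' i0 i1 ltac:(simpl; apply/eqP; lia)).
have e12 := key i1 i2 _ _ _ _ d1 m1 d2 m2 (ne' i1 i2 ltac:(simpl; apply/eqP; lia)).
have e23 := key i2 i3 _ _ _ _ d2 m2 d3 m3 (ne' i2 i3 ltac:(simpl; apply/eqP; lia)).
have e30 := key i3 i0 _ _ _ _ d3 m3 d0 m0 (ne' i3 i0 ltac:(simpl; apply/eqP; lia)).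
have e02 := key i0 i2 _ _ _ _ d0 m0 d2 m2 (ne' i0 i2 ltac:(simpl; apply/eqP; lia)).
have e13 := key i1 i3 _ _ _ _ d1 m1 d3 m3 (ne' i1 i3 ltac:(simpl; apply/eqP; lia)).
rewrite /= in e01 e12 e23 e30 e02 e13.
move/negbT: e02; rewrite -leNgt => e02.
move/negbT: e13; rewrite -leNgt => e13.
rewrite eqxx in e12.
exact: (@c4 R _ _ _ _ _ _ _ _ e01 e12 e23 e30 e02 e13).
Qed.

Theorem theorem2 (R : realType) (m n : nat) :
  (2 <= m)%N -> (2 <= n)%N -> (4 < m * n)%N ->
  ~ has_real_sign_rank (@grid_adj_mx R m n) 2 /\
  ~ (exists Z : 'M[R]_(m * n, 2), sign_realizes (@grid_adj_mx R m n) Z).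
Proof.
move=> hm hn _; have H := @no_Z R m n hm hn.
by split => // [[]].
Qed.
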